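(* Let $\omega\in S_n$. The poset $M_\omega$ contains a $B_2$-pattern (i.e., four distinct elements whose induced subposet is isomorphic to $B_2$) if and only if $M_\omega$ contains a parallelogram-pattern poset.
   Context: Permutations $\omega\in S_n$ are written in one-line notation. Let ${\rm Inv}(\omega)=\{(i,j): 1\le i<j\le n,\ \omega(i)>\omega(j)\}$, $c_i(\omega)=\#\{j: i<j\le n,\ \omega(i)>\omega(j)\}$, and for $i<j$, $c_{i,j}(\omega)=\#\{k: i<k<j,\ \omega(i)>\omega(k)\}$; $[m]=\{1,\dots,m\}$. For $i$ with $c_i(\omega)>0$ and $x\in[c_i(\omega)]$, $m_{i,x}(\omega)\in\mathbb{N}^n$ has $j$-th coordinate $0$ if $j<i$; $x$ if $j=i$; $0$ if $j>i$ and $(i,j)\in{\rm Inv}(\omega)$; $\max\{0,x-c_{i,j}(\omega)\}$ if $j>i$ and $(i,j)\notin{\rm Inv}(\omega)$. $M_\omega$ is the set of all such $m_{i,x}(\omega)$, ordered by the product order on $\mathbb{N}^n$. $B_2$ is the Boolean lattice of rank 2 (a minimum, a maximum, and two incomparable elements between them). For $1\le i<j\le n$, $b<a$ in $[c_i(\omega)]$ and $c<d$ in $[c_j(\omega)]$ with $a+c=b+d$, the set $\{m_{i,a}(\omega),m_{i,b}(\omega),m_{j,c}(\omega),m_{j,d}(\omega)\}$ is a parallelogram-pattern poset if $m_{i,a}(\omega)>m_{j,d}(\omega)$, $m_{i,b}(\omega)>m_{j,c}(\omega)$, and $m_{i,b}(\omega)$, $m_{j,d}(\omega)$ are incomparable.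 *)

(* Defs.v *)
(* Indices 1..n of the paper are rendered as 'I_n (0-based);
   all notions used (inversions, c_i, c_{i,j}) only depend on relative order
   of positions, so the shift is harmless. *)
From mathcomp Require Import all_boot all_fingroup.
Set Implicit Arguments. Unset Strict Implicit. Unset Printing Implicit Defensive.

Definition inv_pair n (w : 'S_n) (i j : 'I_n) : bool := (i < j) && (w j < w i).

Definition cnt n (w : 'S_n) (i : 'I_n) : nat := #|[set j : 'I_n | inv_pair w i j]|.

Definition cnt2 n (w : 'S_n) (i j : 'I_n) : nat :=
  #|[set k : 'I_n | [&& i < k, k < j & w k < w i]]|.

(* m_{i,x}(w) in N^n ; max{0, x - c} is truncated subtraction *)
Definition mvec n (w : 'S_n) (i : 'I_n) (x : nat) : {ffun 'I_n -> nat} :=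
  [ffun j : 'I_n => if j < i then 0
                    else if j == i then x
                    else if inv_pair w i j then 0
                    else x - cnt2 w i j].

Definition inM n (w : 'S_n) (v : {ffun 'I_n -> nat}) : Prop :=
  exists (i : 'I_n) (x : nat), 0 < x <= cnt w i /\ v = mvec w i x.

Definition vle n (u v : {ffun 'I_n -> nat}) : Prop := forall k, u k <= v k.
Definition vlt n (u v : {ffun 'I_n -> nat}) : Prop := vle u v /\ u <> v.

Definition B2le (p q : bool * bool) : bool := (p.1 ==> q.1) && (p.2 ==> q.2).

Definition hasB2 n (w : 'S_n) : Prop :=
  exists f : bool * bool -> {ffun 'I_n -> nat},
    injective f /\ (forall p, inM w (f p)) /\
    (forall p q, B2le p q <-> vle (f p) (f q)).

Definition hasPar n (w : 'S_n) : Prop :=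
  exists (i j : 'I_n) (a b c d : nat),
    (i < j)%N /\ 0 < b < a /\ a <= cnt w i /\ 0 < c < d /\ d <= cnt w j /\
    a + c = b + d /\
    vlt (mvec w j d) (mvec w i a) /\
    vlt (mvec w j c) (mvec w i b) /\
    ~ vle (mvec w i b) (mvec w j d) /\ ~ vle (mvec w j d) (mvec w i b).

(* Main.v *)
Require Import Defs.
From mathcomp Require Import all_boot all_fingroup.
From mathcomp Require Import zify.

Set Implicit Arguments.
Section S.
Variables (n : nat) (w : 'S_n).

Lemma wneq (i j : 'I_n) : i != j -> (w i : nat) != w j.
Proof.
move=> ne; apply/eqP=> /val_inj /perm_inj E; by rewrite E eqxx in ne.
Qed.

Lemma ne_of (a b : 'I_n) : (a : nat) != b -> (a == b) = false.
Proof. by move=> h; apply/eqP => E; rewrite E eqxx in h. Qed.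

Lemma coord_self (i : 'I_n) x : mvec w i x i = x.
Proof. by rewrite ffunE ltnn eqxx. Qed.

Lemma coord_lt (i : 'I_n) x (k : 'I_n) : k < i -> mvec w i x k = 0.
Proof. by move=> h; rewrite ffunE h. Qed.

Lemma mono (i : 'I_n) x y : y <= x -> vle (mvec w i y) (mvec w i x).
Proof.
move=> h k; rewrite !ffunE.
case: ifP => //; case: ifP => //; case: ifP => // _ _ _; exact: leq_sub2r.
Qed.

Lemma le_same {i : 'I_n} {x y} : vle (mvec w i y) (mvec w i x) -> y <= x.
Proof. by move=> /(_ i); rewrite !coord_self. Qed.

Lemma le_lt_false {i j : 'I_n} {x y} : i < j -> 0 < x -> ~ vle (mvec w i x) (mvec w j y).
Proof. by move=> ij x0 /(_ i); rewrite coord_self coord_lt //; lia. Qed.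

Lemma rowle {a b : 'I_n} {x y} : 0 < x -> vle (mvec w a x) (mvec w b y) -> b <= a.
Proof.
move=> x0 h; case: (leqP b a) => // ab; exfalso; exact: (le_lt_false ab x0 h).
Qed.

Lemma le_B {i j : 'I_n} {x y} : i < j -> 0 < y -> vle (mvec w j y) (mvec w i x) ->
  w i < w j /\ y + cnt2 w i j <= x.
Proof.
move=> ij y0 /(_ j); rewrite coord_self ffunE.
have -> : (j < i) = false by apply/negbTE; rewrite -leqNgt ltnW.
have -> : (j == i) = false by apply: ne_of; lia.
rewrite /Defs.inv_pair ij /=.
have ne : (w i : nat) != w j by apply: wneq; apply/negbT; apply: ne_of; lia.
case: ifP => h; first lia.
move=> hh; split; lia.
Qed.

Lemma cnt2_sub {i j : 'I_n} (k : 'I_n) : i < j -> w i < w j ->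
  cnt2 w i k <= cnt2 w i j + cnt2 w j k.
Proof.
move=> ij wij; rewrite /cnt2.
set A := [set l : 'I_n | [&& i < l, l < j & w l < w i]].
set B := [set l : 'I_n | [&& j < l, l < k & w l < w j]].
apply: (@leq_trans #|A :|: B|); last by rewrite cardsU; lia.
apply: subset_leq_card; apply/subsetP => l; rewrite !inE => /and3P [il lk wl].
case: (ltngtP l j) => lj.
- by apply/orP; left; apply/and3P; split => //; lia.
- by apply/orP; right; apply/and3P; split => //; lia.
- have : l = j by apply: val_inj.
  by move=> E; subst l; lia.
Qed.

Lemma cnt2_mono (i j k : 'I_n) : j <= k -> cnt2 w i j <= cnt2 w i k.
Proof.
move=> jk; apply: subset_leq_card; apply/subsetP => l; rewrite !inE.
move=> /and3P [a b c]; apply/and3P; split => //; lia.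
Qed.

Lemma cnt2_pos {p q s : 'I_n} : p < q -> q < s -> w q < w p -> 0 < cnt2 w p s.
Proof.
move=> pq qs wq; apply/card_gt0P; exists q; rewrite inE; apply/and3P; by split.
Qed.

Lemma le_C {i j : 'I_n} {x y} : i < j -> w i < w j -> y + cnt2 w i j <= x ->
  vle (mvec w j y) (mvec w i x).
Proof.
move=> ij wij h k; rewrite !ffunE.
case: ifP => // kj; case: ifP => [/eqP -> | kj'].
  have -> : (j < i) = false by apply/negbTE; rewrite -leqNgt ltnW.
  have -> : (j == i) = false by apply: ne_of; lia.
  rewrite /Defs.inv_pair ij /=.
  have -> : (w j < w i) = false by apply/negbTE; rewrite -leqNgt ltnW.
  lia.
have jk : j < k.
  have nkj : (k : nat) != j.
    by apply/eqP => E; move: kj'; rewrite (val_inj E) eqxx.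
  lia.
case: ifP => // inv.
have ne : (w j : nat) != w k by apply: wneq; apply/negbT; apply: ne_of; lia.
have wjk : w j < w k by move: inv; rewrite /Defs.inv_pair jk /=; lia.
have -> : (k < i) = false by apply/negbTE; rewrite -leqNgt; lia.
have -> : (k == i) = false by apply: ne_of; lia.
have -> : Defs.inv_pair w i k = false by rewrite /Defs.inv_pair; apply/negbTE; lia.
have := cnt2_sub k ij wij; lia.
Qed.

Lemma par_of {i j : 'I_n} : i < j -> w i < w j -> cnt2 w i j + 2 <= cnt w i ->
  2 <= cnt w j -> hasPar w.
Proof.
move=> ij wij hi hj; set C := cnt2 w i j.
exists i, j, (2 + C), (1 + C), 1, 2.
have neq : forall y x, 0 < x -> mvec w j y <> mvec w i x.
  by move=> y x x0 E; have := congr1 (fun f : {ffun 'I_n -> nat} => f i) E; rewrite /= coord_self coord_lt //; lia.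
split => //; split; first lia. split; first lia. split => //. split => //.
split; first lia.
split; first by split; [apply: le_C => //; rewrite /C; lia | apply: neq; lia].
split; first by split; [apply: le_C => //; rewrite /C; lia | apply: neq; lia].
split; first by apply: le_lt_false => //; lia.
by move=> /(le_B ij) [] //; rewrite /C; lia.
Qed.

Lemma core {r s p q : 'I_n} {t z u v} : p < q ->
  0 < t -> 0 < z -> 0 < u <= cnt w p -> 0 < v <= cnt w q -> t <= cnt w r ->
  vle (mvec w s z) (mvec w p u) -> vle (mvec w s z) (mvec w q v) ->
  vle (mvec w p u) (mvec w r t) -> vle (mvec w q v) (mvec w r t) ->
  ~ vle (mvec w p u) (mvec w q v) -> ~ vle (mvec w q v) (mvec w p u) -> hasPar w.
Proof.
move=> pq t0 z0 /andP [u0 up] /andP [v0 vq] tr bp bq pt qt npq nqp.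
have rp : r <= p by apply: (rowle u0 pt).
have rq : r < q by lia.
have [wrq vt] := le_B rq v0 qt.
case: (leqP 2 v) => v2.
  by apply: (par_of rq wrq); lia.
have v1 : v = 1 by lia. subst v.
have qs : q <= s by apply: (rowle z0 bq).
case: (ltngtP q s) => qs'; last first.
- have E : q = s by apply: val_inj.
  subst s; have := le_same bq => zz.
  have ez : z = 1 by lia. by subst z.
- lia.
have ps : p < s by lia.
have [wps zu] := le_B ps z0 bp.
have wqp : w q < w p.
  case: (ltngtP (w p) (w q)) => // h.
  + exfalso; apply: nqp; apply: le_C => //; have := cnt2_mono p q s (ltnW qs'); lia.
  + exfalso; move: h => /eqP; apply/negP; apply: wneq; apply/negbT; apply: ne_of; lia.
have cps := cnt2_pos pq qs' wqp.
case: (ltngtP r p) => rp'.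
- have [wrp ut] := le_B rp' u0 pt.
  by apply: (par_of rp' wrp); lia.
- lia.
- have E : r = p by apply: val_inj. subst r; lia.
Qed.


End S.

Theorem mainTheorem7 (n : nat) (w : 'S_n) : hasB2 w <-> hasPar w.
Proof.
split.
- move=> [f [finj [fM fle]]].
  have l := fun p q (H : B2le p q) => proj1 (fle p q) H.
  have nl := fun p q (H : B2le p q = false) (K : vle (f p) (f q)) =>
    (ltac:(by rewrite (proj2 (fle p q) K) in H) : False).
  have b1 := l (false,false) (true,false) isT.
  have b2 := l (false,false) (false,true) isT.
  have t1 := l (true,false) (true,true) isT.
  have t2 := l (false,true) (true,true) isT.
  have n12 := nl (true,false) (false,true) erefl.
  have n21 := nl (false,true) (true,false) erefl.
  move: b1 b2 t1 t2 n12 n21.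
  have [s [z [/andP [z0 zc] ->]]] := fM (false,false).
  have [r [t [/andP [t0 tc] ->]]] := fM (true,true).
  have [p [u [pu ->]]] := fM (true,false).
  have [q [v [qv ->]]] := fM (false,true).
  move=> b1 b2 t1 t2 n12 n21.
  case: (ltngtP p q) => pq.
  + exact: (core pq t0 z0 pu qv tc b1 b2 t1 t2 n12 n21).
  + exact: (core pq t0 z0 qv pu tc b2 b1 t2 t1 n21 n12).
  + have E : p = q by apply: val_inj. subst q.
    case: (leqP u v) => h.
    * by exfalso; apply: n12; apply: mono.
    * by exfalso; apply: n21; apply: mono; lia.
- move=> [i [j [a [b [c [d [ij [ba [ai [cd [dj [E [[ja _] [[jb _] [n1 n2]]]]]]]]]]]]]]].
  pose f (p : bool * bool) := match p with
    | (false,false) => mvec w j c | (true,false) => mvec w i b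
    | (false,true) => mvec w j d | (true,true) => mvec w i a end.
  have ja' : vle (mvec w j c) (mvec w i a).
    have hm : vle (mvec w i b) (mvec w i a) by apply: mono; lia.
    by move=> k; exact: leq_trans (jb k) (hm k).
  have iff : forall p q, B2le p q <-> vle (f p) (f q).
    move=> [[] []] [[] []]; rewrite /f /B2le /=; split => // H;
    try (by move=> k); try (by apply: mono; lia); try exact: ja; try exact: jb;
    try exact: ja'; try (by case: (n1 H)); try (by case: (n2 H));
    try (by exfalso; apply: (le_lt_false _ _ H); lia);
    try (by have := le_same H; lia).
  exists f; split; last split => //.
  + move=> p q E'; have h1 : B2le p q by apply/iff; rewrite E' => k.
    have h2 : B2le q p by apply/iff; rewrite E' => k.
    by move: p q h1 h2 {E'} => [[] []] [[] []].
  + move=> [[] []] /=; [exists i, a | exists i, b | exists j, d | exists j, c];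
    split => //; lia.
Qed.
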